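(* Let $p\in(0,1)$, $t\subseteq[n]$, and $1\le k\le n-1$. Then \[ \mathrm{Var}(T^t_{k+1})\ge(k+1)\binom{n-|t|}{2k+1}\binom{2k+1}{k}(\mu^t_{k+1})^2\bigl\{p^{-|t|}-1\bigr\}. \]
   Context: $G(n,p)$ is the random graph on $[n]$ where each of the $\binom n2$ edges is present independently with probability $p$; $Y_{i,j}=Y_{j,i}$ is the indicator of edge $\{i,j\}$. $C_k$ is the set of $k$-element subsets of $[n]$. For $t\subseteq[n]$, \[ T^t_k=\sum_{s\in C_k,\ s\cap t=\varnothing}\ \prod_{i\ne j\in s}Y_{i,j}\prod_{i\in s,\ j\in t}Y_{i,j} \] (the number of $(k-1)$-simplices in the link of $t$ in the clique complex $X(n,p)$, when $t$ is a simplex), and $\mu^t_{k}=p^{\binom{k}{2}+|t|k}$, so $\mathbb{E}T^t_k=\binom{n-|t|}{k}\mu^t_k$. *)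

(* Defs.v *)
From mathcomp Require Import all_boot all_order all_algebra.
Set Implicit Arguments. Unset Strict Implicit. Unset Printing Implicit Defensive.
Import Order.TTheory GRing.Theory Num.Theory.
Local Open Scope ring_scope.

(* The 2-element subsets of [n] = 'I_n : the possible edges. *)
Definition pairs (n : nat) : {set {set 'I_n}} := [set e : {set 'I_n} | #|e| == 2%N].

(* A graph on [n] is a set of edges G \subset pairs n; its probability in G(n,p). *)
Definition gnp_prob (R : realFieldType) (n : nat) (p : R) (G : {set {set 'I_n}}) : R :=
  p ^+ #|G| * (1 - p) ^+ (#|pairs n| - #|G|).

Definition gnp_E (R : realFieldType) (n : nat) (p : R) (X : {set {set 'I_n}} -> R) : R :=
  \sum_(G in powerset (pairs n)) gnp_prob p G * X G.

Definition gnp_Var (R : realFieldType) (n : nat) (p : R) (X : {set {set 'I_n}} -> R) : R :=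
  gnp_E p (fun G => X G ^+ 2) - (gnp_E p X) ^+ 2.

Definition Yind (R : realFieldType) (n : nat) (i j : 'I_n) (G : {set {set 'I_n}}) : R :=
  ((i != j) && ([set i; j] \in G))%:R.

Definition Tlink (R : realFieldType) (n : nat) (t : {set 'I_n}) (k : nat)
    (G : {set {set 'I_n}}) : R :=
  \sum_(s : {set 'I_n} | (#|s| == k) && [disjoint s & t])
     ((\prod_(i in s) \prod_(j in s | i != j) Yind R i j G) *
      (\prod_(i in s) \prod_(j in t) Yind R i j G)).

Definition mu (R : realFieldType) (n : nat) (p : R) (t : {set 'I_n}) (k : nat) : R :=
  p ^+ ('C(k, 2) + #|t| * k).

(* Main.v *)
Set Warnings "-notation-overridden,-ambiguous-paths".
Require Import Defs.
From mathcomp Require Import all_boot all_order all_algebra.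
From mathcomp Require Import zify.
From mathcomp Require Import ring.
Set Implicit Arguments. Unset Strict Implicit. Unset Printing Implicit Defensive.
Import Order.TTheory GRing.Theory Num.Theory.
Local Open Scope ring_scope.

Definition Ein n (s : {set 'I_n}) : {set {set 'I_n}} :=
  [set e : {set 'I_n} | (e \subset s) && (#|e| == 2%N)].
Definition Ecr n (s t : {set 'I_n}) : {set {set 'I_n}} :=
  [set [set x.1; x.2] | x in setX s t].
Definition Esx n (s t : {set 'I_n}) := Ein s :|: Ecr s t.

Lemma prod_bool (R : realFieldType) (I : finType) (P : pred I) (b : I -> bool) :
  \prod_(i | P i) ((b i)%:R : R) = ([forall i, P i ==> b i])%:R.
Proof.
case: (boolP [forall i, P i ==> b i]) => H.
  by apply: big1 => i Pi; move/forallP/(_ i): H; rewrite Pi /= => ->.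
have [i] := forallPn H; rewrite negb_imply => /andP [Pi bi].
by rewrite (bigD1 i) //= (negbTE bi) mul0r.
Qed.

Lemma Tterm (R : realFieldType) n (s t : {set 'I_n}) (G : {set {set 'I_n}}) :
  [disjoint s & t] ->
  (\prod_(i in s) \prod_(j in s | i != j) Yind R i j G) *
      (\prod_(i in s) \prod_(j in t) Yind R i j G) = (Esx s t \subset G)%:R.
Proof.
move=> dst.
rewrite /Yind.
under eq_bigr => i _ do rewrite prod_bool.
under [X in _ * X]eq_bigr => i _ do rewrite prod_bool.
rewrite !prod_bool -natrM mulnb; congr ((nat_of_bool _) %:R).
apply/andP/subsetP.
  move=> [/forallP H1 /forallP H2] e; rewrite inE => /orP [].
    rewrite inE => /andP [es /cards2P [i [j [ij eE]]]]; subst e.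
    have iS : i \in s by apply: (subsetP es); exact: set21.
    have jS : j \in s by apply: (subsetP es); exact: set22.
    move: (H1 i); rewrite iS /= => /forallP /(_ j); rewrite jS ij /=.
    by [].
  case/imsetP => [[i j]]; rewrite inE /= => /andP [iS jt] ->.
  move: (H2 i); rewrite iS /= => /forallP /(_ j); rewrite jt /=.
  by case/andP.
move=> H; split; apply/forallP => i; apply/implyP => iS; apply/forallP => j;
  apply/implyP.
  move=> /andP [jS ij]; rewrite ij /=; apply: H; rewrite !inE; apply/orP; left.
  rewrite cards2 ij andbT; apply/subsetP => x; rewrite !inE.
  by case/orP => /eqP ->.
move=> jt.
have ij : i != j.
  by apply/negP => /eqP eij; move: dst; rewrite disjoints_subset => /subsetP /(_ i iS);
    rewrite inE eij jt.
rewrite ij /=; apply: H; rewrite inE; apply/orP; right.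
by apply/imsetP; exists (i, j); rewrite // inE iS jt.
Qed.
Lemma E_ind (R : realFieldType) (n : nat) (p : R) (A : {set {set 'I_n}}) :
  A \subset pairs n -> gnp_E p (fun G => (A \subset G)%:R) = p ^+ #|A|.
Proof.
move=> AP.
set P := pairs n.
pose f e := if e \in P then p else 0.
pose g e := if e \in P then (if e \in A then 0 else 1 - p) else 1.
have H1 : \prod_(e : {set 'I_n}) (f e + g e) = p ^+ #|A|.
  rewrite -prodr_const [RHS]big_mkcond /=; apply: eq_bigr => e _.
  rewrite /f /g; case: (boolP (e \in A)) => eA; first by rewrite (subsetP AP e eA) addr0.
  by case: ifP => _; rewrite ?add0r // addrC subrK.
rewrite -H1 bigA_distr /gnp_E big_mkcond /=.
apply: eq_bigr => G _; symmetry.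
rewrite powersetE.
case: (boolP (G \subset P)) => GP; last first.
  have [e eG eP] := subsetPn GP.
  by rewrite (bigD1 e) //= eG /f (negbTE eP) mul0r.
case: (boolP (A \subset G)) => AG; last first.
  have [e eA eG] := subsetPn AG.
  rewrite mulr0 (bigD1 e) //= (negbTE eG) /g (subsetP AP e eA) eA mul0r //.
rewrite mulr1 /gnp_prob.
rewrite (eq_bigr (fun e : {set 'I_n} => (if e \in G then p else 1) * (if e \in P :\: G then 1 - p else 1))); last first.
  move=> e _; rewrite inE /f /g; case: ifP => eG.
    by rewrite (subsetP GP e eG) /= mulr1.
  rewrite mul1r /=; case: ifP => // eP.
  by rewrite ifN //; apply/negP => eA; rewrite (subsetP AG e eA) in eG.
rewrite big_split /= -!big_mkcond /= !prodr_const cardsD (setIidPr GP) //.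
Qed.

Lemma pair_inj n (v : 'I_n) (t : {set 'I_n}) : v \notin t ->
  {in t &, injective (fun j => [set v; j])}.
Proof.
move=> vt j j' jt j't E.
have : j \in [set v; j'] by rewrite -E set22.
rewrite !inE => /orP [/eqP ejv|/eqP //].
by move: jt; rewrite ejv (negbTE vt).
Qed.

Lemma card_Esx n (s t : {set 'I_n}) : [disjoint s & t] ->
  #|Esx s t| = ('C(#|s|, 2) + #|t| * #|s|)%N.
Proof.
move=> dst.
have sCt : s \subset ~: t by rewrite -disjoints_subset.
rewrite /Esx cardsU (_ : Ein s :&: Ecr s t = set0) ?cards0 ?subn0; last first.
  apply/setP => e; rewrite !inE; apply/negP => /andP [/andP [es _]].
  case/imsetP => [[i j]]; rewrite inE /= => /andP [iS jt] ee.
  have : j \in s by apply: (subsetP es); rewrite ee set22.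
  by move/(subsetP sCt); rewrite inE jt.
rewrite /Ein cards_draws; congr (_ + _)%N.
rewrite /Ecr card_in_imset ?cardsX 1?mulnC //.
move=> [i j] [i' j']; rewrite !inE /= => /andP [iS jt] /andP [i'S j't] E.
have ii' : i = i'.
  have : i \in [set i'; j'] by rewrite -E set21.
  rewrite !inE => /orP [/eqP //|/eqP eij].
  by move/(subsetP sCt): iS; rewrite inE eij j't.
subst i'; congr (_, _); apply: (pair_inj _ jt j't E).
by move/(subsetP sCt): iS; rewrite inE.
Qed.

Lemma card_Esx_I n (s s' t : {set 'I_n}) (v : 'I_n) :
  [disjoint s & t] -> v \in s -> v \in s' ->
  (#|t| <= #|Esx s t :&: Esx s' t|)%N.
Proof.
move=> dst vs vs'.
have vt : v \notin t.
  by move: dst; rewrite disjoints_subset => /subsetP /(_ v vs); rewrite inE.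
rewrite -(card_in_imset (pair_inj vt)); apply: subset_leq_card.
apply/subsetP => e /imsetP [j jt ->]; rewrite !inE; apply/andP; split;
  apply/orP; right; apply/imsetP; exists (v, j) => //; by rewrite inE /= ?vs ?vs' jt.
Qed.

Lemma count_one n (s t : {set 'I_n}) k : #|s| = k.+1 -> [disjoint s & t] ->
  (k.+1 * 'C(n - #|t| - k.+1, k) <=
   #|[set s' : {set 'I_n} | ((#|s'| == k.+1) && [disjoint s' & t]) && (#|s :&: s'| == 1%N)]|)%N.
Proof.
move=> cs dst.
set D := ~: (s :|: t).
set Dk := [set W : {set 'I_n} | W \subset D & #|W| == k].
have cD : #|D| = (n - #|t| - k.+1)%N.
  have h := cardsC (s :|: t); rewrite card_ord cardsU disjoint_setI0 // cards0 cs in h.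
  rewrite -/D in h; lia.
have -> : (k.+1 * 'C(n - #|t| - k.+1, k) = #|setX s Dk|)%N.
  by rewrite cardsX cs cards_draws cD.
have key : forall v W, v \in s -> W \in Dk -> (v \notin W) /\ (s :&: (v |: W) = [set v]).
  move=> v W vs; rewrite inE => /andP [WD _]; split.
    by apply/negP => /(subsetP WD); rewrite !inE vs.
  apply/setP => x; rewrite !inE; apply/andP/eqP => [[xs /orP [/eqP //|xW]]|->].
    by move/(subsetP WD): xW; rewrite !inE xs.
  by rewrite vs eqxx.
rewrite -(@card_in_imset _ _ (fun x => x.1 |: x.2)); last first.
  move=> [v W] [v' W']; rewrite !in_setX /= => /andP [vs WDk] /andP [v's W'Dk] E.
  have [vW sI] := key v W vs WDk; have [v'W' sI'] := key v' W' v's W'Dk.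
  have vv' : v = v'.
    by apply/set1P; rewrite -sI' -E sI set11.
  subst v'; congr (_, _).
  by rewrite -(setU1K vW) E setU1K.
apply: subset_leq_card; apply/subsetP => x /imsetP [[v W]]; rewrite in_setX /= => /andP [vs WDk] ->.
have [vW sI] := key v W vs WDk.
move: WDk; rewrite inE => /andP [WD /eqP cW].
rewrite inE sI cards1 eqxx andbT cardsU1 vW cW eqxx /=.
rewrite disjoints_subset; apply/subsetP => y; rewrite !inE => /orP [/eqP ->|xW].
  by move: dst; rewrite disjoints_subset => /subsetP /(_ v vs); rewrite inE.
by move/(subsetP WD): xW; rewrite !inE negb_or => /andP [].
Qed.

Lemma ffactnD m a b : (m ^_ (a + b) = m ^_ a * (m - a) ^_ b)%N.
Proof.
elim: b => [|b IH]; first by rewrite addn0 ffactn0 muln1.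
by rewrite addnS !ffactnSr IH subnDA mulnA.
Qed.

Lemma binom_id m k :
  ('C(m, k.+1) * (k.+1 * 'C(m - k.+1, k)) = k.+1 * 'C(m, 2 * k + 1) * 'C(2 * k + 1, k))%N.
Proof.
apply/eqP; rewrite -(eqn_pmul2r (fact_gt0 k.+1)) -(eqn_pmul2r (fact_gt0 k)); apply/eqP.
have e1 : ('C(m, k.+1) * (k.+1 * 'C(m - k.+1, k)) * k.+1`! * k`!
           = k.+1 * (('C(m, k.+1) * k.+1`!) * ('C(m - k.+1, k) * k`!)))%N.
  by rewrite !mulnA; lia.
have e2 : (k.+1 * 'C(m, 2 * k + 1) * 'C(2 * k + 1, k) * k.+1`! * k`!
           = k.+1 * 'C(m, 2 * k + 1) * ('C(2 * k + 1, k) * (k`! * (2 * k + 1 - k)`!)))%N.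
  have -> : (2 * k + 1 - k = k.+1)%N by lia.
  rewrite !mulnA; lia.
rewrite e1 e2 bin_fact; last by lia.
rewrite !bin_ffact -ffactnD -mulnA bin_ffact.
by have -> : (k.+1 + k = 2 * k + 1)%N by lia.
Qed.

Lemma E_ext (R : realFieldType) n (p : R) (X Y : {set {set 'I_n}} -> R) :
  (forall G, X G = Y G) -> gnp_E p X = gnp_E p Y.
Proof. by move=> h; apply: eq_bigr => G _; rewrite h. Qed.

Lemma E_lin (R : realFieldType) n (p : R) (I : finType) (S : {set I})
    (F : I -> {set {set 'I_n}} -> R) :
  gnp_E p (fun G => \sum_(s in S) F s G) = \sum_(s in S) gnp_E p (F s).
Proof.
rewrite /gnp_E; under eq_bigr => G _ do rewrite big_distrr.
by rewrite exchange_big.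
Qed.

Lemma cov_ge0 (R : realFieldType) (p : R) a b e e' :
  0 < p -> p <= 1 -> (a + b = e + e')%N -> 0 <= p ^+ a - p ^+ e * p ^+ e'.
Proof.
move=> p0 p1 h; rewrite subr_ge0 -exprD -h exprD.
by apply: ler_piMr; [apply: exprn_ge0; apply: ltW | apply: exprn_ile1 => //; apply: ltW].
Qed.

Lemma cov_bound (R : realFieldType) (p : R) a b e tt :
  0 < p -> p <= 1 -> (a + b = e + e)%N -> (tt <= b)%N ->
  (p ^+ e) ^+ 2 * ((p ^+ tt)^-1 - 1) <= p ^+ a - p ^+ e * p ^+ e.
Proof.
move=> p0 p1 h tb.
have eb : b = (b - tt + tt)%N by rewrite subnK.
have E2 : (p ^+ e) ^+ 2 = p ^+ e * p ^+ e by rewrite expr2.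
rewrite E2 -exprD -h eb !exprD.
set X := p ^+ a; set Y := p ^+ (b - tt); set Z := p ^+ tt.
have Z0 : Z != 0 by rewrite expf_neq0 // gt_eqF.
have -> : X * (Y * Z) * (Z^-1 - 1) = X * Y - X * (Y * Z).
  by rewrite mulrBr mulr1 -!mulrA mulfV // mulr1.
rewrite lerD2r.
by apply: ler_piMr; [apply: exprn_ge0; apply: ltW | apply: exprn_ile1 => //; apply: ltW].
Qed.

Lemma Esx_pairs n (s t : {set 'I_n}) : [disjoint s & t] -> Esx s t \subset pairs n.
Proof.
move=> dst; apply/subsetP => e; rewrite !inE => /orP [/andP [_ //]|].
case/imsetP => [[i j]]; rewrite inE /= => /andP [iS jt] ->.
rewrite cards2; case: (eqVneq i j) => [eij|] //.
by move: dst; rewrite disjoints_subset => /subsetP /(_ i iS); rewrite inE eij jt.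
Qed.

Theorem lemma5p1 (R : realFieldType) (n : nat) (p : R) (t : {set 'I_n}) (k : nat) :
  0 < p -> p < 1 -> (1 <= k)%N -> (k <= n - 1)%N ->
  gnp_Var p (Tlink R t k.+1) >=
    (k.+1)%:R * ('C(n - #|t|, 2 * k + 1))%:R * ('C(2 * k + 1, k))%:R
      * (mu p t k.+1) ^+ 2 * ((p ^+ #|t|)^-1 - 1).
Proof.
move=> p0 p1' _ _.
have p1 : p <= 1 by apply: ltW.
set S := [set s : {set 'I_n} | (#|s| == k.+1) && [disjoint s & t]].
have inS : forall s, s \in S -> #|s| = k.+1 /\ [disjoint s & t].
  by move=> s; rewrite inE => /andP [/eqP -> ->].
pose E s := Esx s t.
have TE : forall G, Tlink R t k.+1 G = \sum_(s in S) ((E s \subset G)%:R : R).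
  move=> G; rewrite /Tlink; apply: eq_big => [s|s]; first by rewrite inE.
  by move=> /andP [_ d]; apply: Tterm.
have V : gnp_Var p (Tlink R t k.+1) =
  \sum_(s in S) \sum_(s' in S) (p ^+ #|E s :|: E s'| - p ^+ #|E s| * p ^+ #|E s'|).
  rewrite /gnp_Var.
  have h1 : gnp_E p (fun G => Tlink R t k.+1 G ^+ 2) =
     \sum_(s in S) \sum_(s' in S) p ^+ #|E s :|: E s'|.
    rewrite (@E_ext R n p _ (fun G => \sum_(s in S) \sum_(s' in S) ((E s :|: E s' \subset G)%:R : R))); last first.
      move=> G; rewrite TE expr2 big_distrl; apply: eq_bigr => s _.
      rewrite big_distrr; apply: eq_bigr => s' _.
      change (((E s \subset G)%:R * (E s' \subset G)%:R : R) = (E s :|: E s' \subset G)%:R).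
      by rewrite -natrM mulnb -subUset.
    rewrite E_lin; apply: eq_bigr => s sS.
    rewrite (E_lin p S (fun s' G => ((E s :|: E s' \subset G)%:R : R))).
    apply: eq_bigr => s' s'S.
    have [_ d] := inS s sS; have [_ d'] := inS s' s'S.
    by rewrite E_ind // subUset !Esx_pairs.
  have h2 : gnp_E p (Tlink R t k.+1) = \sum_(s in S) p ^+ #|E s|.
    rewrite (@E_ext R n p _ (fun G => \sum_(s in S) ((E s \subset G)%:R : R))) //.
    rewrite E_lin; apply: eq_bigr => s sS.
    have [_ d] := inS s sS.
    by rewrite E_ind // Esx_pairs.
  rewrite h1 h2.
  rewrite expr2 big_distrl -sumrB; apply: eq_bigr => s sS.
  rewrite big_distrr -sumrB; apply: eq_bigr => s' s'S.
  done.
set c := (mu p t k.+1) ^+ 2 * ((p ^+ #|t|)^-1 - 1).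
have c0 : 0 <= c.
  apply: mulr_ge0; first by apply: exprn_ge0; apply: exprn_ge0; apply: ltW.
  rewrite subr_ge0 invf_ge1; last by apply: exprn_gt0.
  by apply: exprn_ile1 => //; apply: ltW.
set K := (k.+1 * 'C(n - #|t| - k.+1, k))%N.
have inner : forall s, s \in S ->
   c * K%:R <= \sum_(s' in S) (p ^+ #|E s :|: E s'| - p ^+ #|E s| * p ^+ #|E s'|).
  move=> s sS; have [cs d] := inS s sS.
  rewrite (bigID (fun s' => #|s :&: s'| == 1%N)) /=.
  rewrite -[c * K%:R]addr0; apply: lerD; last first.
    apply: sumr_ge0 => s' /andP [s'S _]; apply: (cov_ge0 p0 p1).
    exact: cardsUI.
  set A := [set s' : {set 'I_n} | ((#|s'| == k.+1) && [disjoint s' & t]) && (#|s :&: s'| == 1%N)].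
  rewrite (eq_bigl (fun s' => s' \in A)); last by move=> s'; rewrite !inE.
  apply: (@le_trans _ _ (\sum_(s' in A) c)); last first.
    apply: ler_sum => s'; rewrite !inE => /andP [/andP [/eqP cs' d'] /cards1P [v sv]].
    have vI : v \in s :&: s' by rewrite sv set11.
    have vs : v \in s by move: vI; rewrite inE => /andP [].
    have vs' : v \in s' by move: vI; rewrite inE => /andP [].
    have eE : #|E s| = ('C(k.+1, 2) + #|t| * k.+1)%N by rewrite /E card_Esx // cs.
    have eE' : #|E s'| = ('C(k.+1, 2) + #|t| * k.+1)%N by rewrite /E card_Esx // cs'.
    rewrite eE' {1}/c /mu -eE.
    apply: (cov_bound (b := #|E s :&: E s'|) p0 p1); first by rewrite cardsUI eE eE'.
    exact: card_Esx_I d vs vs'.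
  rewrite sumr_const -[c *+ _]mulr_natr; apply: (ler_wpM2l c0).
  by rewrite ler_nat; apply: count_one.
rewrite V.
apply: (@le_trans _ _ (\sum_(s in S) c * K%:R)); last by apply: ler_sum.
rewrite sumr_const.
have cS : #|S| = 'C(n - #|t|, k.+1).
  have -> : S = [set s : {set 'I_n} | s \subset ~: t & #|s| == k.+1].
    by apply/setP => s; rewrite !inE disjoints_subset andbC.
  rewrite cards_draws; congr 'C(_, _).
  have h := cardsC t; rewrite card_ord in h; lia.
rewrite cS.
have -> : c * K%:R *+ 'C(n - #|t|, k.+1) = c * ('C(n - #|t|, k.+1) * K)%:R.
  by rewrite -mulr_natr -mulrA -natrM mulnC.
rewrite /K binom_id /c !natrM.
rewrite le_eqVlt; apply/orP; left; apply/eqP; ring.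
Qed.
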